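(* For any odd prime $p$, the Laurent series $\Theta_p(t)\in\mathbb{F}_p(\!(t^{-1})\!)$ is a quadratic irrational.
   Context: The $p$-Cantor sequence: for an odd prime $p$, $p_2=\frac{p-1}{2}$, identify $\{0,\dots,p-1\}$ with $\mathbb{F}_p$ and let $\phi_p(n)$ be the word of length $p$ whose $i$-th letter ($0\le i\le p-1$) is $n\binom{p_2}{i/2}\bmod p$ for even $i$ and $0$ for odd $i$; $\phi_p$ acts on words by concatenation. $(c^{(p)}_i)_{i\ge0}=\lim_n\phi_p^n(1)$ and $\Theta_p(t)=t^{-1}\sum_{i\ge0}c^{(p)}_it^{-i}$. A quadratic irrational is a Laurent series not in $\mathbb{F}_p(t)$ that satisfies a quadratic equation with coefficients in $\mathbb{F}_p[t]$. *)

(* Defs.v *)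
From HB Require Import structures.
From mathcomp Require Import all_boot all_order all_algebra.
Set Implicit Arguments. Unset Strict Implicit. Unset Printing Implicit Defensive.
Import Order.TTheory GRing.Theory Num.Theory.
Local Open Scope ring_scope.

(* Laurent series in t^{-1} with no positive powers of t are represented by
   s : nat -> F, meaning  sum_{m >= 0} s m * t^{-m}. *)

Definition smul (F : nzRingType) (s u : nat -> F) : nat -> F :=
  fun m => \sum_(i < m.+1) s i * u (m - i)%N.

Definition pcoef (F : nzRingType) (P : {poly F}) (k : int) : F :=
  match k with Posz n => P`_n | Negz _ => 0 end.

(* Coefficient of t^k (k : int) of the Laurent series P(t) * s, where
   P in F[t] and s = sum_m s m t^{-m}:  sum_j P_j s_{j-k}. *)
Definition pmul_series (F : nzRingType) (P : {poly F}) (s : nat -> F) (k : int) : F :=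
  \sum_(j < size P) P`_j * (if k <= (j : int) then s `|(j : int) - k|%N else 0).

Definition is_rational_series (F : fieldType) (s : nat -> F) : Prop :=
  exists (P Q : {poly F}), Q != 0 /\ forall k : int, pmul_series Q s k = pcoef P k.

Definition quadratic_irrational (F : fieldType) (s : nat -> F) : Prop :=
  ~ is_rational_series s /\
  exists (A B C : {poly F}), A != 0 /\
    forall k : int, pmul_series A (smul s s) k + pmul_series B s k + pcoef C k = 0.

Definition cantor_letter (p : nat) (n : 'F_p) (i : nat) : 'F_p :=
  if odd i then 0 else n * ('C(((p - 1) %/ 2)%N, i./2))%:R.

Definition cantor_word (p : nat) (n : 'F_p) : seq 'F_p := mkseq (cantor_letter n) p.

Definition cantor_morph (p : nat) (w : seq 'F_p) : seq 'F_p :=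
  flatten (map (@cantor_word p) w).

(* c_i = i-th letter of lim phi_p^n(1); phi_p^{i+1}(1) has length p^{i+1} > i
   and is a prefix of all later iterates. *)
Definition cantor_seq (p : nat) (i : nat) : 'F_p :=
  nth 0 (iter i.+1 (@cantor_morph p) [:: 1]) i.

(* Theta_p(t) = t^{-1} sum_i c_i t^{-i}: coefficient of t^{-m}. *)
Definition Theta (p : nat) : nat -> 'F_p :=
  fun m => if m is m'.+1 then cantor_seq p m' else 0.

(* Main.v *)
Require Import Defs.
From mathcomp Require Import all_boot all_order all_algebra all_field.
From mathcomp Require Import zify ring.
Set Implicit Arguments. Unset Strict Implicit. Unset Printing Implicit Defensive.
Import Order.TTheory GRing.Theory Num.Theory.
Local Open Scope ring_scope.


Section Seq.
Variable p : nat.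
Hypothesis hp : prime p.

Definition W n := iter n (@cantor_morph p) [:: 1].

Lemma morph_cat (s t : seq 'F_p) :
  cantor_morph (s ++ t) = cantor_morph s ++ cantor_morph t.
Proof. by rewrite /cantor_morph map_cat flatten_cat. Qed.

Lemma morph_cons (x : 'F_p) s :
  cantor_morph (x :: s) = cantor_word x ++ cantor_morph s.
Proof. by []. Qed.

Lemma size_morph (s : seq 'F_p) : size (cantor_morph s) = (p * size s)%N.
Proof.
elim: s => [|x s IH]; first by rewrite muln0.
by rewrite morph_cons size_cat IH /cantor_word size_mkseq mulnS.
Qed.

Lemma size_W n : size (W n) = (p ^ n)%N.
Proof. elim: n => [//|n IH]; by rewrite /W iterS -/(W n) size_morph IH expnS. Qed.

Lemma W_S n : W n.+1 = cantor_morph (W n).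
Proof. by []. Qed.

Lemma W_prefix n k : exists t, W (n + k) = W n ++ t.
Proof.
elim: k n => [|k IH] n; first by exists [::]; rewrite addn0 cats0.
have [t Ht] : exists t, W n.+1 = W n ++ t.
  elim: n => [|n IHn].
    have p0 : (0 < p)%N by apply: prime_gt0.
    have -> : W 1 = cantor_word (1 : 'F_p) by rewrite /W /= /cantor_morph /= cats0.
    exists (drop 1 (cantor_word (1 : 'F_p))).
    rewrite -{1}(cat_take_drop 1 (cantor_word 1)); congr (_ ++ _).
    rewrite (take_nth 0) ?size_mkseq // take0 /= /cantor_word nth_mkseq //.
    by rewrite /cantor_letter /= bin0 mul1r.
  case: IHn => t Ht; exists (cantor_morph t).
  by rewrite [LHS]W_S [in LHS]Ht morph_cat -W_S.
have [t' Ht'] := IH n.+1.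
exists (t ++ t'); by rewrite addnS -addSn Ht' Ht catA.
Qed.

Lemma nth_W n i : (i < p ^ n)%N -> nth 0 (W n) i = cantor_seq p i.
Proof.
move=> hi.
have p1 : (1 < p)%N by apply: prime_gt1.
have hi2 : (i < p ^ i.+1)%N.
  apply: (leq_trans (ltn_expl i p1)).
  by rewrite leq_exp2l // ltnW.
rewrite /cantor_seq -/(W i.+1).
have [t1 H1] := W_prefix n i.+1.
have [t2 H2] := W_prefix i.+1 n.
have : nth 0 (W (n + i.+1)) i = nth 0 (W n) i.
  by rewrite H1 nth_cat size_W hi.
rewrite addnC H2 nth_cat size_W hi2 => ->. by [].
Qed.

End Seq.



Lemma coef_1X2 (R : nzRingType) m i :
  (((1 : {poly R}) + 'X^2) ^+ m)`_i = if odd i then 0 else ('C(m, i./2))%:R.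
Proof.
elim: m i => [|m IH] i.
  rewrite expr0 coefC.
  case: i => [|[|i]] //=; case: ifP => //.
rewrite exprSr mulrDr mulr1 coefD coefMXn IH.
case: i => [|[|i]] //=.
- by rewrite !bin0 addr0.
- by rewrite addr0.
rewrite (_ : (i.+2 - 2 = i)%N); last by lia.
rewrite IH negbK.
case: (odd i) => /=; first by rewrite addr0.
by rewrite binS natrD addrC.
Qed.

Lemma Poly_cat (R : comNzRingType) (s t : seq R) :
  Poly (s ++ t) = Poly s + 'X^(size s) * Poly t.
Proof.
elim: s => [|x s IH] /=; first by rewrite add0r expr0 mul1r.
rewrite !cons_poly_def IH exprS; ring.
Qed.

Section Polys.
Variable p : nat.
Hypothesis hp : prime p.
Hypothesis hodd : odd p.

Definition p2 := ((p - 1) %/ 2)%N.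
Definition Ap : {poly 'F_p} := (1 + 'X^2) ^+ p2.

Lemma p2E : p = (p2 * 2).+1.
Proof. have := odd_double_half p. rewrite hodd /p2 => h. lia. Qed.

Lemma Poly_word (x : 'F_p) : Poly (cantor_word x) = x%:P * Ap.
Proof.
apply/polyP => i; rewrite coef_Poly coefCM coef_1X2.
have [ilt|ige] := ltnP i p.
  rewrite /cantor_word nth_mkseq // /cantor_letter -/p2.
  by case: (odd i) => //; rewrite mulr0.
rewrite nth_default ?size_mkseq //.
case oi: (odd i); first by rewrite mulr0.
rewrite bin_small ?mulr0 //.
have := odd_double_half i; rewrite oi => h.
have := p2E => h2. lia.
Qed.

Lemma morph_poly (w : seq 'F_p) :
  Poly (cantor_morph w) = (Poly w \Po 'X^p) * Ap.
Proof.
elim: w => [|x w IH]; first by rewrite /= comp_poly0 mul0r.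
rewrite morph_cons Poly_cat Poly_word /cantor_word size_mkseq IH.
rewrite [Poly (x :: w)]/= cons_poly_def comp_poly_MXaddC.
ring.
Qed.

Lemma charP : p \in [char {poly 'F_p}].
Proof. by rewrite pchar_poly pchar_Fp. Qed.

Lemma frobD (a b : {poly 'F_p}) : (a + b) ^+ p = a ^+ p + b ^+ p.
Proof.
rewrite -!(pFrobenius_autE charP) pFrobenius_autD_comm //.
exact: mulrC.
Qed.

Lemma frob (q : {poly 'F_p}) : q \Po 'X^p = q ^+ p.
Proof.
elim/poly_ind: q => [|q c IH].
  by rewrite comp_poly0 expr0n /= eqn0Ngt prime_gt0.
rewrite comp_poly_MXaddC IH frobD exprMn -rmorphXn /=.
congr (_ + _%:P).
by have := expf_card c; rewrite card_Fp...
Qed.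

Definition Fpoly n : {poly 'F_p} := Poly (W p n).

Lemma F_S n : Fpoly n.+1 = Fpoly n ^+ p * Ap.
Proof. by rewrite /Fpoly W_S morph_poly frob. Qed.

Lemma key n : Fpoly n ^+ 2 * (1 + 'X^2) = 1 + 'X^(2 * p ^ n).
Proof.
elim: n => [|n IH].
  rewrite /Fpoly /W /= cons_poly_def mul0r add0r polyC1 expr1n mul1r.
  by rewrite expn0 muln1.
have hA : Ap ^+ 2 * (1 + 'X^2) = (1 + 'X^2) ^+ p.
  by rewrite /Ap -exprM -exprSr -p2E.
transitivity ((Fpoly n ^+ 2 * (1 + 'X^2)) ^+ p).
  rewrite F_S [in RHS]exprMn -hA -[in RHS]exprM mulnC exprM.
  set y := Fpoly n ^+ p. ring.
by rewrite IH frobD expr1n -exprM expnSr mulnA.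
Qed.

End Polys.



Lemma pmul_neg (F : nzRingType) (P : {poly F}) s m :
  pmul_series P s (Negz m) = \sum_(j < size P) P`_j * s (j + m.+1)%N.
Proof. by apply: eq_bigr => j _; rewrite (_ : (Negz m <= j :> int) = true). Qed.

Section Quad.
Variable p : nat.
Hypothesis hp : prime p.
Hypothesis hodd : odd p.

Lemma T_coef n m : (m <= p ^ n)%N -> ('X * Fpoly p n)`_m = Theta p m.
Proof.
rewrite coefXM; case: m => [//|m] hm /=.
by rewrite /Fpoly coef_Poly nth_W.
Qed.

Lemma smul_coef n m : (m <= p ^ n)%N ->
  smul (Theta p) (Theta p) m = (('X * Fpoly p n) ^+ 2)`_m.
Proof.
move=> hm; rewrite expr2 coefM /smul; apply: eq_bigr => [[j hj]] _ /=.
rewrite !(T_coef (n := n)) //; lia.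
Qed.

Lemma TT n : ('X * Fpoly p n) ^+ 2 * (1 + 'X^2) = 'X^2 + 'X^(2 * p ^ n + 2).
Proof.
by rewrite exprMn -mulrA key // mulrDr mulr1 -exprD addnC.
Qed.

Lemma s_low m : (m < 2)%N -> smul (Theta p) (Theta p) m = 0.
Proof.
move=> hm; rewrite (smul_coef (n := 1)); last first.
  rewrite expn1; have := prime_gt1 hp; lia.
by rewrite exprMn coefXnM hm.
Qed.

Lemma s_rec m : smul (Theta p) (Theta p) m + smul (Theta p) (Theta p) m.+2
  = (m == 0)%:R.
Proof.
have p1 := prime_gt1 hp.
have hlt : (m.+2 < p ^ m.+2)%N by apply: ltn_expl.
rewrite !(smul_coef (n := m.+2)); try lia.
have := congr1 (fun q : {poly _} => q`_m.+2) (TT m.+2).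
rewrite /= mulrDr mulr1 coefD coefMXn /= subn2 /= => h; rewrite addrC h.
rewrite coefD !coefXn.
rewrite (_ : (m.+2 == 2 * p ^ m.+2 + 2)%N = false); last by lia.
by rewrite addr0.
Qed.

Lemma quad : exists (A B C : {poly 'F_p}), A != 0 /\
    forall k : int, pmul_series A (smul (Theta p) (Theta p)) k
      + pmul_series B (Theta p) k + pcoef C k = 0.
Proof.
exists (1 + 'X^2), 0, (-1); split.
  apply/eqP => h; have := congr1 (fun q : {poly _} => q`_0) h.
  by rewrite /= coefD coef1 coefXn coef0 addr0; apply/eqP; rewrite oner_eq0.
have sA : size (1 + 'X^2 : {poly 'F_p}) = 3%N by rewrite addrC -polyC1 size_XnaddC.
move=> k; rewrite {2}/pmul_series size_poly0 big_ord0 addr0.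
rewrite /pmul_series sA !big_ord_recl big_ord0 /= !coefD !coef1 !coefXn /=.
rewrite /bump /=.
case: k => [[|[|[|n]]]|m] /=; rewrite ?coefN ?coef1 /= ?(add0r, addr0, mul1r, mul0r, oppr0).
- by rewrite s_rec /= addrN.
- by rewrite s_low.
- by rewrite s_low.
- by [].
- by rewrite !addSn s_rec.
Qed.

End Quad.



Lemma descent (K : idomainType) (a b : K) : a != b ->
  forall n (Y Z : {poly K}), (size Z <= n)%N ->
  Y ^+ 2 = ('X - a%:P) * ('X - b%:P) * Z ^+ 2 -> Z = 0.
Proof.
move=> hab; elim=> [|n IH] Y Z hs hY.
  by move: hs; rewrite leqn0 size_poly_eq0 => /eqP.
have [->|Z0] := eqVneq Z 0; first done.
have Xa0 : 'X - a%:P != 0 by rewrite polyXsubC_eq0.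
have rY : root Y a.
  have := congr1 (horner^~ a) hY.
  rewrite /= !(hornerM, hornerXn, hornerD, hornerN, hornerX, hornerC) subrr !mul0r => /eqP.
  by rewrite mulf_eq0 orbb.
have [Y1 hY1] := factor_theorem _ _ rY.
have h1 : Y1 ^+ 2 * ('X - a%:P) = ('X - b%:P) * Z ^+ 2.
  apply: (mulIf Xa0) => /=.
  transitivity (Y ^+ 2); first by rewrite hY1; ring.
  by rewrite hY; ring.
have rZ : root Z a.
  have := congr1 (horner^~ a) h1.
  rewrite /= !(hornerM, hornerXn, hornerD, hornerN, hornerX, hornerC) subrr mulr0 => /esym/eqP.
  by rewrite mulf_eq0 subr_eq0 (negbTE hab) /= ?mulf_eq0 ?orbb ?expf_eq0.
have [Z1 hZ1] := factor_theorem _ _ rZ.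
have [Z10|Z1n0] := eqVneq Z1 0; first by rewrite hZ1 Z10 mul0r.
have h2 : Y1 ^+ 2 = ('X - a%:P) * ('X - b%:P) * Z1 ^+ 2.
  apply: (mulIf Xa0) => /=.
  by rewrite h1 hZ1; ring.
have hs1 : (size Z1 <= n)%N.
  by move: hs; rewrite hZ1 size_Mmonic ?monicXsubC // size_XsubC addn2.
by rewrite hZ1 (IH Y1 Z1 hs1 h2) mul0r.
Qed.

Lemma sizeM2 (F : fieldType) (a : {poly F}) k :
  (size a <= k)%N -> (size (a ^+ 2) <= (2 * k).-1)%N.
Proof.
move=> h; rewrite expr2; apply: (leq_trans (size_mul_leq _ _)); lia.
Qed.

Lemma sizeM2X (F : fieldType) (a b : {poly F}) k :
  (size a <= k)%N -> (size b <= 3)%N -> (size (a ^+ 2 * b)%R <= 2 * k + 2)%N.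
Proof.
move=> h hb; apply: (leq_trans (size_mul_leq _ _)).
have := sizeM2 h; lia.
Qed.

Section Irr.
Variable p : nat.
Hypothesis hp : prime p.
Hypothesis hodd : odd p.

Lemma irr : ~ is_rational_series (Theta p).
Proof.
move=> [P [Q [Q0 hPQ]]].
have rec : forall m, \sum_(j < size Q) Q`_j * Theta p (j + m.+1)%N = 0.
  by move=> m; have := hPQ (Negz m); rewrite pmul_neg.
set d := size Q.
have d0 : (0 < d)%N by rewrite size_poly_gt0.
pose R := \poly_(i < d) Q`_(d.-1 - i).
have R0 : R`_0 != 0 by rewrite coef_poly d0 subn0 -lead_coefE lead_coef_eq0.
pose n := (2 * d + 4)%N.
pose N := (p ^ n)%N.
have hN : (n < N)%N by apply: ltn_expl; apply: prime_gt1.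
pose T := 'X * Fpoly p n.
have hT : forall i, (i <= N)%N -> T`_i = Theta p i by move=> i; apply: T_coef.
pose U := \poly_(i < d) (R * T)`_i.
pose E := R * T - U.
have hE : forall i, (i <= N)%N -> E`_i = 0.
  move=> i hi; rewrite coefB coef_poly; case: ifP => hid; first by rewrite subrr.
  rewrite subr0 coefM.
  transitivity (\sum_(j < size Q) Q`_j * Theta p (j + (i - d).+1)%N); last exact: rec.
  rewrite -(big_mkord (fun _ => true) (fun j => R`_j * T`_(i - j))).
  rewrite (big_cat_nat _ (n := d)) //=; last by lia.
  rewrite [X in _ + X]big1_seq ?addr0; last first.
    move=> j /andP[_]; rewrite mem_index_iota => /andP[hj _].
    by rewrite coef_poly ltnNge hj mul0r.
  rewrite big_nat_rev /= big_mkord; apply: eq_bigr => [[j hj]] _ /=.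
  rewrite coef_poly ifT; last by lia.
  rewrite hT; last by lia.
  rewrite (_ : (d.-1 - (0 + d - j.+1))%N = j); last by lia.
  by rewrite (_ : (i - (0 + d - j.+1))%N = (j + (i - d).+1)%N); last by lia.
have sR : (size R <= d)%N by apply: size_poly.
have sU : (size U <= d)%N by apply: size_poly.
have hD : R ^+ 2 * 'X^2 = U ^+ 2 * (1 + 'X^2).
  apply/eqP; rewrite -subr_eq0; apply/eqP/polyP => i; rewrite coef0.
  have [hi|hi] := leqP i N.
  - have -> : R ^+ 2 * 'X^2 - U ^+ 2 * (1 + 'X^2) =
        E * ((U *+ 2 + E) * (1 + 'X^2)) - R ^+ 2 * 'X^(2 * N + 2).
      transitivity (R ^+ 2 * (T ^+ 2 * (1 + 'X^2) - 'X^(2 * N + 2))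
                    - U ^+ 2 * (1 + 'X^2)).
        by rewrite TT // addrK.
      rewrite /E; ring.
    rewrite coefB coefMXn ifT; last by lia.
    rewrite subr0 coefM big1 // => [[j hj]] _ /=.
    by rewrite hE ?mul0r //; lia.
  - have hNd : (2 * d + 4 < N)%N := hN.
    rewrite nth_default //.
    apply: (leq_trans (size_polyD _ _)); rewrite size_polyN geq_max.
    have sX : size ('X^2 : {poly 'F_p}) = 3%N by rewrite size_polyXn.
    have s1X : size (1 + 'X^2 : {poly 'F_p}) = 3%N.
      by rewrite addrC -polyC1 size_XnaddC.
    apply/andP; split.
    + apply: (leq_trans (sizeM2X sR (eq_leq sX))); lia.
    + apply: (leq_trans (sizeM2X sU (eq_leq s1X))); lia.
have nz : ('X^2 + 1 : {poly 'F_p}) != 0.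
  by rewrite -size_poly_eq0 -polyC1 size_XnaddC.
have [L [rs hrs _]] := FinSplittingFieldFor nz.
move: hrs; rewrite /= rmorphD /= map_polyXn rmorph1 => hrs.
have srs := eqp_size hrs.
rewrite size_prod_XsubC -polyC1 size_XnaddC // in srs.
case: rs hrs srs => [//|z rs] hrs _.
have rz : root ('X^2 + 1 : {poly L}) z.
  by rewrite (eqp_root hrs) root_prod_XsubC mem_head.
have hz : z ^+ 2 = -1.
  move: rz; rewrite /root !(hornerD, hornerXn, hornerC, hornerX) .
  by move=> h; apply/eqP; rewrite -addr_eq0 h.
have chL : p \in [char L] by rewrite pchar_lalg pchar_Fp.
have hzz : z != - z.
  apply/eqP => h.
  have : z *+ 2 == 0 by rewrite mulr2n {1}h addNr.
  rewrite -mulr_natl mulf_eq0 -(dvdn_pcharf chL) => /orP[].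
    move/(dvdn_leq (isT : (0 < 2)%N)) => h2.
    have hp1 := prime_gt1 hp; have p2 : p = 2%N by lia.
    by move: hodd; rewrite p2.
  move/eqP => z0; move: hz; rewrite z0 expr0n /= => /eqP.
  by rewrite eq_sym oppr_eq0 oner_eq0.
pose f := map_poly (in_alg L) : {poly 'F_p} -> {poly L}.
have hDL := congr1 f hD.
rewrite /f !rmorphM rmorphD /= map_polyXn map_polyX rmorph1 in hDL.
set R' := map_poly (in_alg L) R in hDL.
set U' := map_poly (in_alg L) U in hDL.
have hfac : ('X - z%:P) * ('X - (- z)%:P) = 1 + 'X^2 :> {poly L}.
  by rewrite polyCN opprK -subr_sqr -rmorphXn /= hz polyCN polyC1 opprK addrC.
have U'0 : U' = 0.
  apply: (descent hzz (n := size U') (Y := R' * 'X)) => //.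
  rewrite hfac; transitivity (R' * R' * ('X * 'X)); first ring.
  rewrite hDL; ring.
have R'0 : R' != 0.
  rewrite map_poly_eq0; apply: contraNneq R0 => ->; by rewrite coef0.
move: hDL; rewrite U'0 !mul0r => /eqP.
by rewrite !mulf_eq0 orbb (negbTE R'0) /= polyX_eq0.
Qed.

End Irr.


Theorem lemma5p8 (p : nat) (hp : prime p) (hodd : odd p) :
  quadratic_irrational (Theta p).
Proof.
split; [exact: irr | exact: quad].
Qed.
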